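(* Let $X$ be a topological space, and assume that for each $x\in X$, player ONE does not have a winning strategy in the game $\alpha^{\mathrm{game}}(X,x)$. Then $X$ is $\alpha_{2^-}$ (and thus locally Ramsey).
   Context: Convention: a ''sequence'' is a countably infinite set; a countably infinite set $A$ converges to $x$ if $x\notin A$ and every neighborhood of $x$ contains all but finitely many elements of $A$. $\lim_m x_{nm}=x$ means $x_{nm}\neq x$ for all $m$ and every neighborhood of $x$ contains $x_{nm}$ for all but finitely many $m$. The game $\alpha^{\mathrm{game}}(X,x)$ is played by ONE and TWO in innings $n\in\mathbb N$: in the $n$-th inning ONE chooses a sequence $S_n\subseteq X$ converging to $x$, and TWO responds with an infinite $T_n\subseteq S_n$. TWO wins if $\bigcup_nT_n$ converges to $x$; otherwise ONE wins. $X$ is $\alpha_{2^-}$ if for each $x\in X$, whenever $\lim_m x_{nm}=x$ for all $n$, there are $m_1<m_2<\dots$ with $\bigcup_n\{x_{1m_n},\dots,x_{nm_n}\}$ converging to $x$. $X$ is locally Ramsey if for each $x\in X$, whenever $\lim_m x_{nm}=x$ for all $n$, there is an infinite $I\subseteq\mathbb N$ with $\{x_{nm}: n,m\in I, n<m\}$ converging to $x$. *)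

(* Defs.v *)
From mathcomp Require Import all_boot all_order.
From mathcomp Require Import boolp classical_sets functions cardinality topology.
Set Implicit Arguments. Unset Strict Implicit. Unset Printing Implicit Defensive.
Local Open Scope classical_set_scope.

Section Defs.
Variable X : topologicalType.

Definition conv_set (A : set X) (x : X) : Prop :=
  ~ A x /\ forall U, nbhs x U -> finite_set (A `\` U).

Definition is_sequence (A : set X) : Prop := countable A /\ infinite_set A.

Definition converges_seq (A : set X) (x : X) : Prop :=
  is_sequence A /\ conv_set A x.

Definition lim_seq (f : nat -> X) (x : X) : Prop :=
  (forall m, f m <> x) /\
  forall U, nbhs x U -> finite_set [set m | ~ U (f m)].

(* Strategies of ONE in alpha^game(X,x): maps from the list of TWO's previous
   moves T_0,...,T_{n-1} to ONE's next move S_n. *)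
Definition strategy_ONE := seq (set X) -> set X.

Definition legal_ONE (x : X) (sigma : strategy_ONE) : Prop :=
  forall h, converges_seq (sigma h) x.

Definition play_against (sigma : strategy_ONE) (T : nat -> set X) : Prop :=
  forall n, T n `<=` sigma (mkseq T n) /\ infinite_set (T n).

Definition ONE_has_winning_strategy (x : X) : Prop :=
  exists sigma : strategy_ONE, legal_ONE x sigma /\
    forall T, play_against sigma T -> ~ converges_seq (\bigcup_n T n) x.

Definition alpha2minus : Prop :=
  forall (x : X) (f : nat -> nat -> X), (forall n, lim_seq (f n) x) ->
  exists m : nat -> nat, (forall n, (m n < m n.+1)%N) /\
    conv_set [set y | exists n k, (k <= n)%N /\ y = f k (m n)] x.

Definition locally_Ramsey : Prop :=
  forall (x : X) (f : nat -> nat -> X), (forall n, lim_seq (f n) x) ->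
  exists I : set nat, infinite_set I /\
    conv_set [set y | exists n m, I n /\ I m /\ (n < m)%N /\ y = f n m] x.

End Defs.

(* Main.v *)
Require Import Defs.
From mathcomp Require Import all_boot all_order.
From mathcomp Require Import boolp classical_sets functions cardinality topology.
Set Implicit Arguments. Unset Strict Implicit. Unset Printing Implicit Defensive.
Local Open Scope classical_set_scope.

Lemma infinite_natP (A : set nat) :
  (forall k, exists j, A j /\ (k < j)%N) -> infinite_set A.
Proof.
move=> H /finite_fsetP [fs E].
have [j [Aj lt]] := H (\max_(i <- finmap.enum_fset fs) i)%N.
move: Aj; rewrite E /= => jin.
have := @leq_bigmax_seq nat (finmap.enum_fset fs) xpredT id j jin isT.
by rewrite leqNgt lt.
Qed.

Section Core.
Variables (X : topologicalType) (x : X) (f : nat -> nat -> X).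
Hypothesis hf : forall n, lim_seq (f n) x.

Lemma conv_set_sub (A B : set X) : A `<=` B -> conv_set B x -> conv_set A x.
Proof.
move=> AB [nB fB]; split; first by move/AB.
move=> U hU; apply: sub_finite_set (fB U hU) => y [/AB Ay nU]; by split.
Qed.

Definition G : set X := [set y | forall U, nbhs x U -> U y].

Fixpoint II (T : nat -> set X) (n : nat) : set nat :=
  match n with
  | 0 => setT
  | k.+1 => if `[< infinite_set (f k @` II T k `\` G) >]
            then II T k `&` f k @^-1` (T k `|` G)
            else II T k `&` f k @^-1` G
  end.

Definition S T n := f n @` II T n `\` G.

Lemma II_ext T T' n : (forall k, (k < n)%N -> T k = T' k) -> II T n = II T' n.
Proof.
elim: n => [//|n IH] H /=.
rewrite IH; last by move=> k kn; apply: H; exact: ltnW.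
by rewrite H.
Qed.

Lemma II_sub T n : II T n.+1 `<=` II T n.
Proof. by move=> m /=; case: asboolP => _ []. Qed.

Lemma II_anti T k l : (k <= l)%N -> II T l `<=` II T k.
Proof.
elim: l => [|l IH]; first by rewrite leqn0 => /eqP ->.
rewrite leq_eqVlt => /orP[/eqP->//|]; rewrite ltnS => kl.
by move=> m /II_sub /(IH kl).
Qed.

Lemma II_prop T k m : II T k.+1 m -> (T k `|` G) (f k m).
Proof. by move=> /=; case: asboolP => _ [_ h] //; right. Qed.

Lemma S_conv T n : infinite_set (S T n) -> converges_seq (S T n) x.
Proof.
move=> iS; split; first split => //.
  apply: card_le_trans (card_image_le (f n) setT).
  apply: subset_card_le => y [[m _ <-] _]; by exists m.
split.
  by move=> [[m _ e] _]; apply: (proj1 (hf n) m).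
move=> U hU; apply: sub_finite_set (finite_image (f n) (proj2 (hf n) U hU)).
by move=> y [[[m _ <-] _] nU]; exists m.
Qed.

Lemma II_inf T : (forall n, infinite_set (S T n) -> T n `<=` S T n /\ infinite_set (T n)) ->
  forall n, infinite_set (II T n).
Proof.
move=> HT; elim=> [|n IH] /=; first exact: infinite_nat.
case: asboolP => iS.
  have [TS iT] := HT n iS.
  move=> fin; apply: iT; apply: sub_finite_set (finite_image (f n) fin).
  move=> y Ty; case: (TS y Ty) => -[m Im fm] _; exists m => //; split => //.
  by left; rewrite /= fm.
have fS : finite_set (S T n).
  by case: (pselect (finite_set (S T n))) => // h; exfalso; exact: iS h.
pose B := \bigcup_(y in S T n) [set m | f n m = y].
have fB : finite_set B.
  apply: (@bigcup_finite X nat (S T n) (fun y => [set m | f n m = y]) fS) => y [_ nGy].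
  have [U [hU nU]] : exists U, nbhs x U /\ ~ U y.
    apply: contrapT => H; apply: nGy => U hU; apply: contrapT => nU.
    by apply: H; exists U.
  apply: sub_finite_set (proj2 (hf n) U hU) => m /= e; by rewrite e.
move=> fin; apply: IH.
apply: (@sub_finite_set _ _ ((II T n `&` f n @^-1` G) `|` B)); last first.
  by rewrite finite_setU; split.
move=> m Im; case: (pselect (G (f n m))) => g; first by left.
right; exists (f n m) => //; split => //; by exists m.
Qed.

Lemma core T : conv_set (\bigcup_n T n) x ->
  (forall n, infinite_set (S T n) -> T n `<=` S T n /\ infinite_set (T n)) ->
  conv_set [set y | exists k m, II T k.+1 m /\ y = f k m] x.
Proof.
move=> [_ cT] HT; split.
  by move=> [k [m [_ e]]]; apply: (proj1 (hf k) m); rewrite -e.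
move=> U hU; apply: sub_finite_set (cT U hU).
move=> y [[k [m [Im ->]]] nU]; split => //.
case: (II_prop Im) => [Tk|Gk]; first by exists k.
by exfalso; apply: nU; apply: Gk.
Qed.

Lemma S_mkseq T n : S (nth set0 (mkseq T n)) n = S T n.
Proof. by rewrite /S (@II_ext _ T) // => k kn; rewrite nth_mkseq. Qed.

Lemma exT : ~ ONE_has_winning_strategy x ->
  exists T, conv_set (\bigcup_n T n) x /\
  forall n, infinite_set (S T n) -> T n `<=` S T n /\ infinite_set (T n).
Proof.
move=> hONE.
case: (pselect (exists S0, converges_seq S0 x)) => [[S0 hS0]|noS]; last first.
  exists (fun _ => set0); split.
    split; first by case.
    by move=> U _; apply: sub_finite_set (finite_set0 X) => y [[]].
  by move=> n iS; exfalso; apply: noS; exists (S (fun=> set0) n); exact: S_conv.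
pose sigma : strategy_ONE X := fun h =>
  if `[< converges_seq (S (nth set0 h) (size h)) x >]
  then S (nth set0 h) (size h) else S0.
have legal : legal_ONE x sigma.
  by move=> h; rewrite /sigma; case: asboolP.
case: (pselect (exists T, play_against sigma T /\
   converges_seq (\bigcup_n T n) x)) => [[T [pT cT]]|nE]; last first.
  exfalso; apply: hONE; exists sigma; split => // T pT cT.
  by apply: nE; exists T.
exists T; split; first exact: cT.2.
move=> n iS; have [Tsub iT] := pT n; split => //.
move: Tsub; rewrite /sigma size_mkseq S_mkseq.
case: asboolP => [_ //|nc]; exfalso; apply: nc; exact: S_conv.
Qed.

End Core.

Theorem proposition2p10 (X : topologicalType) :
  (forall x : X, ~ ONE_has_winning_strategy x) ->
  alpha2minus X /\ locally_Ramsey X.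
Proof.
move=> hONE; split.
- move=> x f hf.
  have [T [cT HT]] := exT hf (hONE x).
  have Hinf := II_inf hf HT.
  have H : forall n k, exists j, II x f T n j /\ (k < j)%N.
    move=> n k; apply: contrapT => nH; apply: (Hinf n).
    apply: (sub_finite_set _ (finite_II k.+1)) => j Ij /=.
    rewrite ltnS leqNgt; apply/negP => kj; apply: nH; by exists j.
  pose g n k := projT1 (cid (H n k)).
  have gP n k : II x f T n (g n k) /\ (k < g n k)%N := projT2 (cid (H n k)).
  pose m := fix m n := if n is n'.+1 then g n.+1 (m n') else g 1 0.
  have Jm n : II x f T n.+1 (m n) by case: n => [|n]; exact: (gP _ _).1.
  exists m; split; first by move=> n; exact: (gP _ _).2.
  apply: conv_set_sub (core hf cT HT) => y [n [k [kn ->]]].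
  have kn1 : (k.+1 <= n.+1)%N by []. 
  exists k, (m n); split => //; move: (Jm n); apply: II_anti; exact: kn1.
- move=> x f hf.
  have [T [cT HT]] := exT hf (hONE x).
  have Hinf := II_inf hf HT.
  have H : forall n k, exists j, II x f T n j /\ (k < j)%N.
    move=> n k; apply: contrapT => nH; apply: (Hinf n).
    apply: (sub_finite_set _ (finite_II k.+1)) => j Ij /=.
    rewrite ltnS leqNgt; apply/negP => kj; apply: nH; by exists j.
  pose g n k := projT1 (cid (H n k)).
  have gP n k : II x f T n (g n k) /\ (k < g n k)%N := projT2 (cid (H n k)).
  pose m := fix m n := if n is n'.+1 then g (m n').+1 (m n') else g 1 0.
  have inc n : (m n < m n.+1)%N by exact: (gP _ _).2.
  have Jm n : II x f T (m n).+1 (m n.+1) by exact: (gP _ _).1.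
  have mono i j : (i <= j)%N -> (m i <= m j)%N.
    elim: j => [|j IH]; first by rewrite leqn0 => /eqP ->.
    rewrite leq_eqVlt => /orP[/eqP->//|]; rewrite ltnS => ij.
    exact: leq_trans (IH ij) (ltnW (inc j)).
  have ge n : (n <= m n)%N.
    by elim: n => // n IH; exact: leq_ltn_trans IH (inc n).
  exists (range m); split.
    apply: infinite_natP => k; exists (m k.+1); split; first by exists k.+1.
    exact: ge.
  apply: conv_set_sub (core hf cT HT).
  move=> y [a [b [[i _ <-] [[j _ <-] [ab ->]]]]].
  have ij : (i < j)%N by rewrite ltnNge; apply/negP => /mono; rewrite leqNgt ab.
  case: j ij ab => // j; rewrite ltnS => ij ab.
  exists (m i), (m j.+1); split => //.
  have mij : ((m i).+1 <= (m j).+1)%N by rewrite ltnS; exact: (mono _ _ ij).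
  move: (Jm j); apply: II_anti; exact: mij.
Qed.
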